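(* For all integers $s,t$ with $0\leq s\leq t$ and $t\geq 1$, the complete bipartite graph $K_{s,t}$ (where $K_{0,t}=\overline{K_t}$) satisfies $\operatorname{th}_{\operatorname{H}}(K_{s,t})=\lceil 2\sqrt{t}+s-1\rceil$. Since $\kappa(K_{s,t})=s$ and $|V(K_{s,t})|=s+t$, this shows the bound $\operatorname{th}_{\operatorname{H}}(G)\geq\lceil 2\sqrt{n-\kappa}+\kappa-1\rceil$ (for $G$ of order $n$ and vertex connectivity $\kappa$) is attained for every $\kappa\geq 0$.
   Context: All graphs are finite, simple and undirected; $\kappa$ denotes vertex connectivity. Hopping color change rule: a blue vertex $v$ may force a white vertex $w$ to become blue if $v$ has not previously performed a force and every neighbor of $v$ is blue. For an initial blue set $B$, a chronological list of forces of $B$ is a sequence of such forces applied one at a time until no further force is possible; its underlying unordered set is a set of forces of $B$. $B$ is a hopping forcing set if some chronological list of forces of $B$ turns all vertices blue. For a set of forces $\mathcal F$ of $B$, let $\mathcal F^{(0)}=B$ and for $t\geq1$ let $\mathcal F^{(t)}$ be the set of vertices $w\notin U_{t-1}:=\bigcup_{i=0}^{t-1}\mathcal F^{(i)}$ for which there is $(v\to w)\in\mathcal F$ with $v\in U_{t-1}$ and all neighbors of $v$ in $U_{t-1}$. $\operatorname{pt}_{\operatorname{H}}(G;\mathcal F)$ is the least $t$ with $\bigcup_{i=0}^t\mathcal F^{(i)}=V(G)$ ($\infty$ if none); $\operatorname{pt}_{\operatorname{H}}(G;B)$ is the minimum of $\operatorname{pt}_{\operatorname{H}}(G;\mathcal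 F)$ over sets of forces $\mathcal F$ of $B$ ($\infty$ if $B$ is not a hopping forcing set). $\operatorname{th}_{\operatorname{H}}(G)=\min_{B\subseteq V(G)}\big(|B|+\operatorname{pt}_{\operatorname{H}}(G;B)\big)$. *)

(* Defs.v *)
From mathcomp Require Import all_boot all_order all_algebra.
From mathcomp Require Import Rstruct.

Set Implicit Arguments. Unset Strict Implicit. Unset Printing Implicit Defensive.
Import Order.TTheory GRing.Theory Num.Theory.

(* A finite simple graph: vertex type T (finType) with adjacency relation e,
   assumed symmetric and irreflexive where needed. *)
Section Hopping.
Variables (T : finType) (e : rel T).

(* v may force w (hopping rule) given the current blue set and the set of
   vertices that have already performed a force. *)
Definition can_hop (blue used : {set T}) (v w : T) : Prop :=
  [/\ v \in blue, v \notin used, w \notin blue & forall u, e v u -> u \in blue].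

Fixpoint chron_from (blue used : {set T}) (l : seq (T * T)) : Prop :=
  match l with
  | [::] => ~ (exists v w, can_hop blue used v w)
  | (v, w) :: l' => can_hop blue used v w /\ chron_from (w |: blue) (v |: used) l'
  end.

Definition chron_list (B : {set T}) (l : seq (T * T)) : Prop := chron_from B set0 l.

Definition set_of_forces (B : {set T}) (F : {set T * T}) : Prop :=
  exists l, chron_list B l /\ F = [set x | x \in l].

Definition hopping_forcing_set (B : {set T}) : Prop :=
  exists l, chron_list B l /\ B :|: [set x.2 | x in [set y | y \in l]] = setT.

Fixpoint Uset (B : {set T}) (F : {set T * T}) (t : nat) : {set T} :=
  match t with
  | 0 => B
  | t'.+1 =>
      let U := Uset B F t' in
      U :|: [set w | (w \notin U) &&
               [exists v, ((v, w) \in F) && (v \in U) &&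
                          [forall u, e v u ==> (u \in U)]]]
  end.

Definition ptF_is (B : {set T}) (F : {set T * T}) (k : nat) : Prop :=
  Uset B F k = setT /\ forall j, j < k -> Uset B F j != setT.

Definition ptB_is (B : {set T}) (k : nat) : Prop :=
  hopping_forcing_set B /\
  (exists F, set_of_forces B F /\ ptF_is B F k) /\
  (forall F j, set_of_forces B F -> ptF_is B F j -> k <= j).

Definition thH_is (m : nat) : Prop :=
  (exists B k, ptB_is B k /\ #|B| + k = m) /\
  (forall B k, ptB_is B k -> m <= #|B| + k).

End Hopping.

Definition Kst_rel (s t : nat) : rel ('I_s + 'I_t)%type :=
  fun x y => match x, y with
             | inl _, inr _ | inr _, inl _ => true
             | _, _ => false
             end.
Arguments Kst_rel : clear implicits.

(* Main.v *)
Require Import Defs.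
From mathcomp Require Import all_boot all_order all_algebra.
From mathcomp Require Import Rstruct.

Import Order.TTheory GRing.Theory Num.Theory.
Local Open Scope ring_scope.
From mathcomp Require Import zify lra.
Local Close Scope ring_scope.
Set Implicit Arguments. Unset Strict Implicit. Unset Printing Implicit Defensive.

Section G.
Variables (T : finType) (e : rel T).

Lemma Uset_S B F r : Uset e B F r \subset Uset e B F r.+1.
Proof. by rewrite /= subsetUl. Qed.

Lemma Uset_mono B F r r' : r <= r' -> Uset e B F r \subset Uset e B F r'.
Proof.
move=> /subnKC <-; elim: (r' - r) => [|d IH]; first by rewrite addn0.
by rewrite addnS (subset_trans IH) // Uset_S.
Qed.

Lemma B_sub (B : {set T}) (F : {set T * T}) r : B \subset Uset e B F r.
Proof. exact: (@Uset_mono B F 0 r). Qed.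

Lemma Uset_new B F r w : w \in Uset e B F r.+1 -> w \notin B ->
  exists v, [/\ (v, w) \in F, v \in Uset e B F r & forall u, e v u -> u \in Uset e B F r].
Proof.
elim: r w => [|r IH] w.
  rewrite /= inE => /orP [->//|]; rewrite inE => /andP [_ /existsP [v /andP [/andP [h1 h2] /forallP h3]]] _.
  by exists v; split => // u euv; have := h3 u; rewrite euv.
rewrite [Uset _ _ _ r.+2]/= inE => /orP [hw hB|].
  have [v [h1 h2 h3]] := IH w hw hB.
  exists v; split => //; first by apply: (subsetP (Uset_S _ _ _)).
  by move=> u /h3; apply: (subsetP (Uset_S _ _ _)).
rewrite inE => /andP [_ /existsP [v /andP [/andP [h1 h2] /forallP h3]]] _.
by exists v; split => // u euv; have := h3 u; rewrite euv.
Qed.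

Lemma chron_inj blue used l : chron_from e blue used l ->
  (forall p, p \in l -> p.1 \notin used) /\
  (forall p q, p \in l -> q \in l -> p.1 = q.1 -> p = q).
Proof.
elim: l blue used => [|[v w] l IH] blue used /=; first by split.
move=> [[hb hu hw hn] /IH [H1 H2]]; split.
  move=> p; rewrite inE => /orP [/eqP -> //|/H1]; by rewrite inE negb_or => /andP [].
move=> p q; rewrite !inE => /orP [/eqP ->|hp] /orP [/eqP ->|hq] //= E.
- by have := H1 q hq; rewrite -E !inE eqxx.
- by have := H1 p hp; rewrite E !inE eqxx.
- exact: H2.
Qed.

Lemma count_lemma (B : {set T}) (F : {set T * T}) (X : {set T}) j :
  (forall v w w', (v, w) \in F -> (v, w') \in F -> w = w') ->
  ~: X \subset B ->
  (forall r v, r < j -> (forall u, e v u -> u \in Uset e B F r) -> v \in X) ->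
  forall r, r <= j -> #|Uset e B F r :&: X| <= #|B :&: X| * r.+1.
Proof.
move=> Hinj HX Hf; elim => [|r IH] hr; first by rewrite muln1.
set U := Uset e B F r.+1; set U0 := Uset e B F r.
have h1 : #|U :&: X| <= #|B :&: X| + #|U :\: B|.
  apply: (@leq_trans #|(B :&: X) :|: (U :\: B)|); last by rewrite cardsU leq_subr.
  apply: subset_leq_card; apply/subsetP => x.
  rewrite !inE => /andP [hU hX]; rewrite hU hX andbT /=; by case: (x \in B).
pose f w := odflt w [pick v | ((v, w) \in F) && (v \in U0) && [forall u, e v u ==> (u \in U0)]].
have hf : forall w, w \in U :\: B -> [/\ (f w, w) \in F, f w \in U0 & forall u, e (f w) u -> u \in U0].
  move=> w; rewrite inE => /andP [hB hU].
  have [v [a b c]] := Uset_new hU hB.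
  rewrite /f; case: pickP => [v' /andP [/andP [a' b'] /forallP c']|/(_ v)].
    by split => // u euv; have := c' u; rewrite euv.
  by rewrite a b /=; move/negbT/negP; case; apply/forallP => u; apply/implyP/c.
have h2 : #|U :\: B| <= #|U0 :&: X|.
  rewrite -(card_in_imset (f := f)); last first.
    move=> w1 w2 hw1 hw2 E.
    have [a1 _ _] := hf w1 hw1; have [a2 _ _] := hf w2 hw2.
    by rewrite E in a1; exact: (Hinj _ _ _ a1 a2).
  apply: subset_leq_card; apply/subsetP => v /imsetP [w hw ->].
  have [_ b c] := hf w hw; rewrite inE b /=.
  exact: (Hf r).
have := IH (ltnW hr); rewrite -/U0; move: h1 h2; rewrite !mulnS; lia.
Qed.
End G.

Section K.
Variables s t : nat.
Local Notation V := ('I_s + 'I_t)%type.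
Local Notation G := (Kst_rel s t).
Definition XR : {set V} := [set x | if x is inr _ then true else false].
Definition XL : {set V} := [set x | if x is inl _ then true else false].

Lemma cardXR : #|XR| = t.
Proof.
rewrite (_ : XR = [set inr i | i in [set: 'I_t]]); last first.
  apply/setP => [[i|i]]; rewrite !inE //; last by apply/esym/imsetP; exists i.
  by apply/esym/imsetP => -[j _].
by rewrite card_imset ?cardsT ?card_ord //; move=> i j [].
Qed.

Lemma cardXL : #|XL| = s.
Proof.
rewrite (_ : XL = [set inl i | i in [set: 'I_s]]); last first.
  apply/setP => [[i|i]]; rewrite !inE //; first by apply/esym/imsetP; exists i.
  by apply/esym/imsetP => -[j _].
by rewrite card_imset ?cardsT ?card_ord //; move=> i j [].
Qed.

Lemma compXR : ~: XR = XL.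
Proof. by apply/setP => [[i|i]]; rewrite !inE. Qed.
Lemma compXL : ~: XL = XR.
Proof. by apply/setP => [[i|i]]; rewrite !inE. Qed.

Lemma inj_of_chron (B : {set V}) l F : chron_list G B l -> F = [set x | x \in l] ->
  forall v w w', (v, w) \in F -> (v, w') \in F -> w = w'.
Proof.
move=> /chron_inj [_ H] -> v w w'; rewrite !inE => h1 h2.
by have [] := H _ _ h1 h2 erefl.
Qed.

Lemma caseS (B : {set V}) l F k : chron_list G B l -> F = [set x | x \in l] ->
  ptF_is G B F k -> (forall i, inl i \in B) ->
  t <= #|B :&: XR| * k.+1 /\ #|B| = s + #|B :&: XR|.
Proof.
move=> hl hF [hk hmin] hS.
have hX : ~: XR \subset B by apply/subsetP => -[i|i]; rewrite !inE.
split.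
  have := @count_lemma _ G B F XR k (inj_of_chron hl hF) hX.
  move=> /(_ _ k (leqnn k)); rewrite hk setTI cardXR; apply.
  move=> r [i|i] hr hN; rewrite inE //.
  have := hmin r hr; case/negP; apply/eqP/setP => -[x|x]; rewrite inE.
    by apply: (subsetP (@B_sub _ G B F r)).
  exact: hN.
rewrite -(cardsID XR B) addnC; congr (_ + _).
by rewrite (setDE B XR) compXR; rewrite (setIidPr _) ?cardXL // -compXR.
Qed.

Lemma caseT (B : {set V}) l F k : chron_list G B l -> F = [set x | x \in l] ->
  ptF_is G B F k -> (forall j, inr j \in B) ->
  s <= #|B :&: XL| * k.+1 /\ #|B| = t + #|B :&: XL|.
Proof.
move=> hl hF [hk hmin] hS.
have hX : ~: XL \subset B by apply/subsetP => -[i|i]; rewrite !inE.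
split.
  have := @count_lemma _ G B F XL k (inj_of_chron hl hF) hX.
  move=> /(_ _ k (leqnn k)); rewrite hk setTI cardXL; apply.
  move=> r [i|i] hr hN; rewrite inE //.
  have := hmin r hr; case/negP; apply/eqP/setP => -[x|x]; rewrite inE.
    exact: hN.
  by apply: (subsetP (@B_sub _ G B F r)).
rewrite -(cardsID XL B) addnC; congr (_ + _).
by rewrite (setDE B XL) compXL; rewrite (setIidPr _) ?cardXR // -compXL.
Qed.

Lemma kst_cases (B : {set V}) l F k : chron_list G B l -> F = [set x | x \in l] ->
  ptF_is G B F k ->
  (exists b, #|B| = s + b /\ t <= b * k.+1) \/
  (exists a, [/\ 0 < s, #|B| = t + a & s <= a * k.+1]).
Proof.
move=> hl hF hk.
case: (boolP [forall i, inl i \in B]) => [/forallP hS|/forallPn [i hi]].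
  by have [h1 h2] := caseS hl hF hk hS; left; exists #|B :&: XR|.
case: (boolP [forall j, inr j \in B]) => [/forallP hT|/forallPn [j hj]].
  have [h1 h2] := caseT hl hF hk hT; right; exists #|B :&: XL|; split => //.
  by have := ltn_ord i; lia.
exfalso.
have hU : forall r, Uset G B F r = B.
  elim => [//|r IH]; rewrite /= IH; apply/setP => x; rewrite !inE.
  case: (boolP (x \in B)) => //= _.
  apply/negbTE/negP => /existsP [v /andP [_ /forallP hv]].
  case: v hv => v hv.
    by have := hv (inr j); rewrite /= (negbTE hj).
  by have := hv (inl i); rewrite /= (negbTE hi).
by case: hk => hk _; move: hi; rewrite -(hU k) hk inE.
Qed.

End K.

Lemma pt_min (T : finType) (e : rel T) B F j : Uset e B F j = setT -> exists2 j', j' <= j & ptF_is e B F j'.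
Proof.
move=> hj; have ex : exists n, Uset e B F n == setT by exists j; apply/eqP.
case: (ex_minnP ex) => m /eqP hm hmin; exists m; first by apply: hmin; apply/eqP.
by split => // i hi; apply/negP => /hmin; rewrite leqNgt hi.
Qed.

Section U.
Variables (s t' b : nat) (hb1 : 0 < b) (hbt : b <= t'.+1).
Local Notation t := t'.+1.
Local Notation V := ('I_s + 'I_t)%type.
Local Notation G := (Kst_rel s t).
Definition Bu : {set V} := [set x : V | if x is inr i then i < b else true].
Definition bl n : {set V} := [set x : V | if x is inr i then i < b + n else true].
Definition ul n : {set V} := [set x : V | if x is inr i then i < n else false].
Definition lst_from n m : seq (V * V) :=
  [seq (inr (inord i), inr (inord (i + b))) | i <- iota n m].
Definition lst := lst_from 0 (t - b).
Definition Fu : {set V * V} := [set x | x \in lst].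

Lemma chron_gen m n : n + m = t - b -> chron_from G (bl n) (ul n) (lst_from n m).
Proof.
elim: m n => [|m IH] n hnm /=.
  move=> [v [w [_ _ hw _]]]; case: w hw => w; rewrite inE //.
  by rewrite -ltnNge; have := ltn_ord w; lia.
have hn : n < t by lia.
have hnb : n + b < t by lia.
split.
  split; rewrite ?inE ?inordK //; try lia.
  by move=> [u|u] //= _; rewrite inE.
rewrite (_ : inr _ |: bl n = bl n.+1); last first.
  apply/setP => -[x|x]; rewrite !inE //.
  rewrite (_ : (inr x == _ :> V) = (x == inord (n + b))) //.
  rewrite -val_eqE /= inordK //.
  by case: (boolP (x == n + b :> nat)) => [/eqP ->|hx] /=; lia.
rewrite (_ : inr _ |: ul n = ul n.+1); last first.
  apply/setP => -[x|x]; rewrite !inE //.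
  rewrite (_ : (inr x == _ :> V) = (x == inord n)) //.
  rewrite -val_eqE /= inordK //.
  by case: (boolP (x == n :> nat)) => [/eqP ->|hx] /=; lia.
apply: IH; lia.
Qed.

Lemma chron_Bu : chron_list G Bu lst.
Proof.
rewrite /chron_list (_ : Bu = bl 0); last by apply/setP => -[x|x]; rewrite !inE ?addn0.
rewrite (_ : set0 = ul 0); last by apply/setP => -[x|x]; rewrite !inE.
by apply: chron_gen.
Qed.

Lemma in_lst j : b <= j < t -> (inr (inord (j - b)), inr (inord j)) \in lst.
Proof.
move=> /andP [h1 h2]; apply/mapP; exists (j - b).
  by rewrite mem_iota; lia.
by rewrite subnK.
Qed.

Lemma hfs_Bu : hopping_forcing_set G Bu.
Proof.
exists lst; split; first exact: chron_Bu.
apply/setP => -[x|x]; rewrite !inE //.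
case: (ltnP x b) => //= hx; apply/imsetP.
exists (inr (inord (x - b)), inr (inord x)).
  by rewrite inE; apply: in_lst; rewrite hx ltn_ord.
by rewrite /= inord_val.
Qed.

Lemma Uset_Bu r (j : 'I_t) : j < b * r.+1 -> inr j \in Uset G Bu Fu r.
Proof.
elim: r j => [|r IH] j hj; first by rewrite /= inE; lia.
rewrite /= inE; case: (boolP (inr j \in Uset G Bu Fu r)) => //= hU.
rewrite inE hU /=.
have hjb : b * r.+1 <= j by rewrite leqNgt; apply/negP => /IH; apply/negP.
have hjb' : b <= j by apply: leq_trans hjb; rewrite leq_pmulr.
apply/existsP; exists (inr (inord (j - b))).
have hin : (inr (inord (j - b)), inr j) \in Fu.
  by rewrite inE -{2}(inord_val j) in_lst // hjb' ltn_ord.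
rewrite hin /=.
apply/andP; split.
  apply: IH; rewrite inordK; have := ltn_ord j; lia.
apply/forallP => -[u|u] //=.
apply: (subsetP (@B_sub _ G Bu Fu r)); by rewrite inE.
Qed.

Lemma card_BuXR : #|Bu :&: XR s t| <= b.
Proof.
apply: (@leq_trans #|[set inr (widen_ord hbt i) | i in [set: 'I_b]] : {set V}|).
  apply: subset_leq_card; apply/subsetP => -[x|x]; rewrite !inE ?andbT // => hx.
  by apply/imsetP; exists (Ordinal hx) => //; congr inr; apply: val_inj.
by apply: leq_trans (leq_imset_card _ _) _; rewrite cardsT card_ord.
Qed.

Lemma key j : t <= b * j.+1 -> t' %/ b <= j.
Proof. move=> h; have := leq_trunc_div t' b; nia. Qed.

Lemma ptB_Bu : ptB_is G Bu (t' %/ b).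
Proof.
have inlB : forall i, inl i \in Bu by move=> i; rewrite inE.
have lb : forall F j, set_of_forces G Bu F -> ptF_is G Bu F j -> t' %/ b <= j.
  move=> F j [l [hl hF]] hpt; apply: key.
  have [h1 _] := caseS hl hF hpt inlB.
  by apply: leq_trans h1 _; rewrite leq_mul2r card_BuXR orbT.
have hsf : set_of_forces G Bu Fu by exists lst; split => //; apply: chron_Bu.
split; first exact: hfs_Bu.
split => //; exists Fu; split => //; split.
  apply/setP => -[x|x]; rewrite inE.
    by apply: (subsetP (@B_sub _ G Bu Fu _)); rewrite inE.
  apply: Uset_Bu; have := ltn_ord x; have := ltn_ceil t' hb1; nia.
move=> j hj; apply/negP => /eqP hU.
have [j' hj' hpt] := pt_min hU.
have := lb _ _ hsf hpt; lia.
Qed.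

Lemma card_Bu : #|Bu| <= s + b.
Proof.
apply: (@leq_trans #|XL s t :|: (Bu :&: XR s t)|).
  by apply: subset_leq_card; apply/subsetP => -[x|x]; rewrite !inE ?andbT.
apply: leq_trans (leq_card_setU _ _).1 _.
by rewrite cardXL leq_add2l card_BuXR.
Qed.
End U.

Local Open Scope ring_scope.
Definition m0f (s t : nat) : nat :=
  `|Num.ceil (2 * Num.sqrt (t%:R : Rdefinitions.R) + s%:R - 1)|%N.

Lemma amgm b c : (4 * (b * c) <= (b + c) ^ 2)%N.
Proof.
wlog le: b c / (c <= b)%N.
  move=> H; case: (leqP c b) => h; first exact: H.
  by rewrite [(b * c)%N]mulnC [(b + c)%N]addnC; apply: H; apply: ltnW.
rewrite -(subnKC le) sqrnD. set d := (b - c)%N.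
nia.
Qed.

Section S.
Variables (s t : nat) (hst : (s <= t)%N) (ht : (1 <= t)%N).
Local Notation R := Rdefinitions.R.
Local Notation x := (2 * Num.sqrt (t%:R : R) + s%:R - 1).
Local Notation m0 := (m0f s t).
Lemma m0_facts : x <= m0%:R /\ m0%:R - 1 < x.
Proof.
have sq0 : 0 <= Num.sqrt (t%:R : R) by apply: sqrtr_ge0.
have sq1 : 1 <= Num.sqrt (t%:R : R).
  by rewrite -{1}sqrtr1 ler_sqrt ?ler0n // ler1n.
have s0 : (0:R) <= s%:R by rewrite ler0n.
have hx : 0 <= x by  lra.
have c0 : (0 <= Num.ceil x)%R by rewrite ceil_ge0; lra.
have -> : (m0%:R : R) = (Num.ceil x)%:~R.
  by rewrite /m0f natr_absz ger0_norm.
split; first exact: ceil_ge.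
have := ceilB1_lt x. by rewrite intrD /=; lra.
Qed.

Lemma sq_t : Num.sqrt (t%:R : R) ^+ 2 = t%:R.
Proof. by rewrite sqr_sqrtr ?ler0n. Qed.

Lemma m0_le (N : nat) : x <= N%:R -> (m0 <= N)%N.
Proof.
move=> h; have [_ h2] := m0_facts.
have : (m0%:R : R) < N%:R + 1 by lra.
by rewrite natr1 ltr_nat ltnS.
Qed.

Lemma lbA b k : (t <= b * k.+1)%N -> (m0 <= s + b + k)%N.
Proof.
move=> h; apply: m0_le.
have hn : (4 * t <= (b + k.+1) ^ 2)%N by have := amgm b k.+1; nia.
have hr : (4 * t%:R : R) <= (b%:R + k%:R + 1) ^+ 2.
  by move: hn; rewrite -[k.+1]addn1 -(ler_nat R) natrX natrM !natrD addrA.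
have sq0 : 0 <= Num.sqrt (t%:R : R) by apply: sqrtr_ge0.
have := sq_t; rewrite !natrD; move: hr.
have : (0:R) <= b%:R by rewrite ler0n.
have : (0:R) <= k%:R by rewrite ler0n.
nra.
Qed.

Lemma lbB a k : (1 <= s)%N -> (s <= a * k.+1)%N -> (m0 <= t + a + k)%N.
Proof.
move=> h1 h; apply: m0_le.
have hn : (4 * s <= (a + k.+1) ^ 2)%N by have := amgm a k.+1; nia.
have hr : (4 * s%:R : R) <= (a%:R + k%:R + 1) ^+ 2.
  by move: hn; rewrite -[k.+1]addn1 -(ler_nat R) natrX natrM !natrD addrA.
set X := Num.sqrt (t%:R : R); set Y := Num.sqrt (s%:R : R).
have X0 : 0 <= X by apply: sqrtr_ge0.
have Y1 : 1 <= Y by rewrite /Y -{1}sqrtr1 ler_sqrt ?ler0n // ler1n.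
have YX : Y <= X by rewrite /Y /X ler_sqrt ?ler0n // ler_nat.
have Xs : X ^+ 2 = t%:R by apply: sq_t.
have Ys : Y ^+ 2 = s%:R by rewrite sqr_sqrtr ?ler0n.
have a0 : (0:R) <= a%:R by rewrite ler0n.
have k0 : (0:R) <= k%:R by rewrite ler0n.
have hM : 2 * Y <= a%:R + k%:R + 1 by nra.
have hP : 0 <= (X - Y) * (X + Y - 2) by apply: mulr_ge0; lra.
rewrite -/X !natrD; nra.
Qed.

Lemma ubC : exists c, [/\ (s + c = m0.+1)%N, (4 * t <= c ^ 2)%N & ((c.-1) ^ 2 < 4 * t)%N].
Proof.
have [h1 h2] := m0_facts.
have sq1 : 1 <= Num.sqrt (t%:R : R) by rewrite -{1}sqrtr1 ler_sqrt ?ler0n // ler1n.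
have s0 : (0:R) <= s%:R by rewrite ler0n.
have hsm : (s < m0)%N by rewrite -(ltr_nat R); move: h1;  lra.
exists (m0.+1 - s)%N.
have cR : ((m0.+1 - s)%N%:R : R) = m0%:R + 1 - s%:R.
  by rewrite natrB ?natr1 //; apply: ltnW; apply: ltnW.
have cR' : ((m0.+1 - s).-1%N%:R : R) = m0%:R - s%:R.
  by rewrite (_ : (m0.+1 - s).-1 = m0 - s)%N ?natrB //; [apply: ltnW | lia].
have Xs := sq_t.
set y := Num.sqrt (t%:R : R) in h1 h2 sq1 Xs.
split; first by lia.
- rewrite -(ler_nat R) natrX natrM cR.
  have : 0 <= (m0%:R + 1 - s%:R - 2 * y) * (m0%:R + 1 - s%:R + 2 * y).
    by apply: mulr_ge0; lra.
  nra.
- rewrite -(ltr_nat R) natrX natrM cR'.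
  have : 0 < (2 * y - (m0%:R - s%:R)) * (2 * y + (m0%:R - s%:R)).
    by apply: mulr_gt0; lra.
  nra.
Qed.
End S.

Unset Implicit Arguments.

Theorem proposition3p7 (s t : nat) (hst : (s <= t)%N) (ht : (1 <= t)%N) :
  thH_is (Kst_rel s t)
    `|Num.ceil (2 * Num.sqrt (t%:R : Rdefinitions.R) + s%:R - 1)|%N.
Proof.
change (thH_is (Kst_rel s t) (m0f s t)).
case: t hst ht => [//|t'] hst ht.
have LB : forall B k, ptB_is (Kst_rel s t'.+1) B k -> (m0f s t'.+1 <= #|B| + k)%N.
  move=> B k [_ [[F [[l [hl hF]] hpt]] _]].
  case: (kst_cases hl hF hpt) => [[b [-> h]]|[a [h0 -> h]]].
  - have := lbA hst ht h; lia.
  - have := lbB hst ht h0 h; lia.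
have [c [h1 h2 h3]] := ubC hst ht.
have [b [p [hb1 hbt hp1 htp hsum]]] : exists b p,
    [/\ (0 < b)%N, (b <= t'.+1)%N, (0 < p)%N, (t'.+1 <= b * p)%N & (s + b + p = (m0f s t'.+1).+1)%N].
  have hc := odd_double_half c; rewrite -muln2 in hc.
  move: (c./2) hc => q; case: (odd c) => /= hc; subst c.
  - exists q.+1, q; rewrite /= in h3; split; try nia.
  - exists q, q; split; try nia.
split; last exact: LB.
exists (Bu s t' b), (t' %/ b)%N; split; first exact: ptB_Bu.
have hLB := LB _ _ (ptB_Bu s hb1 hbt).
have hk : (t' %/ b < p)%N by rewrite ltn_divLR // mulnC.
move: (card_Bu s hbt) => hc; apply/eqP; rewrite eqn_leq hLB andbT.
apply: (@leq_trans (s + b + t' %/ b)%N); [by rewrite leq_add2r | lia].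
Qed.
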